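(* For every positive integer $t$, $$B_0(1,2t+1)=p_{de}(2t),\qquad B_0(1,2t)=p_{de}(2t-1)+p_{do}(2t-1),$$ $$B_1(1,2t)=p_{de}(2t-1),\qquad B_1(1,2t+1)=p_{de}(2t)+p_{do}(2t).$$
   Context: For a partition $\pi$, $s(\pi)$ is its smallest part. $\mathrm{Spt}1_{do}(n)$ is the set of partitions $\pi$ of $n$ in which $s(\pi)$ occurs exactly once and the remaining parts are pairwise distinct and each has parity different from that of $s(\pi)$. $B_0(1,n)$ (resp. $B_1(1,n)$) is the number of $\pi\in\mathrm{Spt}1_{do}(n)$ whose number of parts greater than $s(\pi)$ is even (resp. odd). $p_{de}(n)$ (resp. $p_{do}(n)$) is the number of partitions of $n$ into distinct even (resp. distinct odd) parts, with value $1$ at $n=0$. *)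

(* Defs.v *)
From mathcomp Require Import all_boot.
Set Implicit Arguments. Unset Strict Implicit. Unset Printing Implicit Defensive.

(* A partition of n is represented by its multiplicity function
   m : {0..n} -> {0..n}, where m i is the number of times the part i occurs.
   (Every part of a partition of n is <= n and occurs at most n times.) *)
Definition ptn (n : nat) := {ffun 'I_n.+1 -> 'I_n.+1}.

Definition is_ptn (n : nat) (m : ptn n) : bool :=
  ((m ord0 : nat) == 0) && (\sum_(i < n.+1) i * m i == n).

Definition is_smallest_part (n : nat) (m : ptn n) (s : 'I_n.+1) : bool :=
  (0 < m s) && [forall i : 'I_n.+1, (i < s) ==> ((m i : nat) == 0)].

Definition nparts_gt (n : nat) (m : ptn n) (s : nat) : nat :=
  \sum_(i < n.+1 | s < i) (m i : nat).

Definition spt1do_at (n : nat) (m : ptn n) (s : 'I_n.+1) : bool :=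
  is_smallest_part m s && ((m s : nat) == 1) &&
  [forall i : 'I_n.+1, (s < i) ==>
      (((m i : nat) <= 1) && ((0 < m i) ==> (odd i != odd s)))].

Definition B (b : bool) (n : nat) : nat :=
  #|[set m : ptn n | is_ptn m &&
      [exists s : 'I_n.+1, is_smallest_part m s && spt1do_at m s &&
                           (odd (nparts_gt m s) == b)]]|.

Definition B0 (n : nat) := B false n.
Definition B1 (n : nat) := B true n.

Definition p_de (n : nat) : nat :=
  #|[set m : ptn n | is_ptn m &&
      [forall i : 'I_n.+1, ((m i : nat) <= 1) && ((0 < m i) ==> ~~ odd i)]]|.

Definition p_do (n : nat) : nat :=
  #|[set m : ptn n | is_ptn m &&
      [forall i : 'I_n.+1, ((m i : nat) <= 1) && ((0 < m i) ==> odd i)]]|.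

(* Main.v *)
Require Import Defs.
From mathcomp Require Import all_boot.
From mathcomp Require Import zify.
From Stdlib Require Import FunctionalExtensionality.
Set Implicit Arguments. Unset Strict Implicit. Unset Printing Implicit Defensive.

Definition vf n (m : ptn n) (i : nat) : nat := if i < n.+1 then (m (inord i) : nat) else 0.
Definition mk n (F : nat -> nat) : ptn n := [ffun i : 'I_n.+1 => inord (F i)].

Lemma vf_ord n (m : ptn n) (i : 'I_n.+1) : vf m i = m i.
Proof. by rewrite /vf ltn_ord inord_val. Qed.

Lemma vf_out n (m : ptn n) i : n < i -> vf m i = 0.
Proof. by rewrite /vf ltnS => h; rewrite leqNgt h. Qed.

Lemma mkK n (m : ptn n) : mk n (vf m) = m.
Proof. by apply/ffunP => i; rewrite ffunE vf_ord; apply: val_inj; rewrite /= inordK. Qed.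

Lemma vf_mk n F : (forall i, F i <= n) -> (forall i, n < i -> F i = 0) -> vf (mk n F) = F.
Proof.
move=> h1 h2; apply: functional_extensionality => i; rewrite /vf.
case: ltnP => h.
  by rewrite ffunE /= inordK // inordK // ltnS h1.
by rewrite h2.
Qed.

Lemma card_bij (T U : finType) (A : {set T}) (B : {set U}) (g : T -> U) (h : U -> T) :
  {in A, forall x, g x \in B} -> {in B, forall y, h y \in A} ->
  {in A, cancel g h} -> {in B, cancel h g} -> #|A| = #|B|.
Proof.
move=> gA hB gK hK; apply/eqP; rewrite eqn_leq; apply/andP; split.
  rewrite -(card_in_imset (can_in_inj gK)); apply: subset_leq_card.
  by apply/subsetP => y /imsetP [x xA ->]; exact: gA.
rewrite -(card_in_imset (can_in_inj hK)); apply: subset_leq_card.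
by apply/subsetP => y /imsetP [x xA ->]; exact: hB.
Qed.

Lemma sum_ind N s (x : nat) : s < N -> \sum_(i < N) (if nat_of_ord i == s then x else 0) = x.
Proof.
move=> h; rewrite (bigD1 (Ordinal h)) //= eqxx big1 ?addn0 // => i ne.
case: eqP => // e; case/negP: ne; apply/eqP; exact: val_inj.
Qed.

Lemma sum_adj N (u v : nat -> nat) a c x y : a < N -> c < N ->
  (forall i, i < N -> u i + (if i == a then x else 0) = v i + (if i == c then y else 0)) ->
  \sum_(i < N) u i + x = \sum_(i < N) v i + y.
Proof.
move=> ha hc h.
have e : \sum_(i < N) (u i + (if nat_of_ord i == a then x else 0)) =
         \sum_(i < N) (v i + (if nat_of_ord i == c then y else 0)).
  by apply: eq_bigr => i _; apply: h.
by move: e; rewrite !big_split /= sum_ind // sum_ind.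
Qed.

Lemma term_le N (f : nat -> nat) a : a < N -> a * f a <= \sum_(i < N) i * f i.
Proof. by move=> h; rewrite (bigD1 (Ordinal h)) //= leq_addr. Qed.

Lemma odd_wsum N (f : nat -> nat) : odd (\sum_(i < N) i * f i) = odd (\sum_(i < N | odd i) f i).
Proof.
elim: N => [|N IH]; first by rewrite !big_ord0.
rewrite big_ord_recr (big_mkcond (fun i : 'I_N.+1 => odd i)) big_ord_recr /= -big_mkcond /= !oddD IH oddM.
by case: (odd N) => //=; rewrite ?addbF.
Qed.

Definition isminb (f : nat -> nat) j := (0 < f j) && (\sum_(i < j) f i == 0).

Lemma isminP f s : 0 < f s -> (forall i, i < s -> f i = 0) -> forall j, isminb f j = (j == s).
Proof.
move=> fs z j; rewrite /isminb; case: (ltngtP j s) => h.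
- by rewrite z.
- have: f s <= \sum_(i < j) f i by rewrite (bigD1 (Ordinal h)) //= leq_addr.
  by case: (\sum_(i < j) f i) => [|k]; [rewrite leqNgt fs | rewrite andbF].
- by subst; rewrite fs big1 // => i _; apply: z.
Qed.

Definition Bset b n := [set m : ptn n | is_ptn m && [exists s : 'I_n.+1,
   is_smallest_part m s && spt1do_at m s && (odd (nparts_gt m s) == b)]].

Definition SPc n (f : nat -> nat) s := [/\ s <= n, f s = 1, (forall i, i < s -> f i = 0),
  (forall i, s < i -> f i <= 1 /\ (0 < f i -> odd i != odd s)) &
  (f 0 = 0 /\ \sum_(i < n.+1) i * f i = n)].

Definition kpar n (f : nat -> nat) s := odd (\sum_(i < n.+1 | s < i) f i).

Lemma Bset_SP n b (m : ptn n) : m \in Bset b n -> exists s, SPc n (vf m) s /\ kpar n (vf m) s = b.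
Proof.
have vfo : forall i (h : i < n.+1), vf m i = m (Ordinal h) := fun i h => vf_ord m (Ordinal h).
rewrite inE => /andP [/andP[h0 /eqP hs] /existsP [s /andP [/andP [hsm hsp] /eqP hk]]].
move: hsm => /andP [ms0 /forallP hlt].
move: hsp => /andP [/andP [_ /eqP ms1] /forallP hgt].
exists (nat_of_ord s); split; last first.
  by rewrite /kpar -hk /nparts_gt; apply: congr1; apply: eq_bigr => i _; rewrite vf_ord.
split.
- by rewrite -ltnS ltn_ord.
- by rewrite vf_ord ms1.
- move=> i lti; have io : i < n.+1 by apply: ltn_trans lti (ltn_ord s).
  rewrite (vfo _ io); apply/eqP; move: (hlt (Ordinal io)); rewrite /= lti; exact.
- move=> i gti; case: (ltnP n i) => hi; first by rewrite vf_out.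
  rewrite -ltnS in hi; rewrite (vfo _ hi).
  move: (hgt (Ordinal hi)); rewrite /= gti /= => /andP [-> /implyP h]; split=> // /h.
- split; first by rewrite (vf_ord m ord0); apply/eqP.
  by rewrite -[X in _ = X]hs; apply: eq_bigr => i _; rewrite vf_ord.
Qed.

Lemma SP_Bset n b (m : ptn n) s : SPc n (vf m) s -> kpar n (vf m) s = b -> m \in Bset b n.
Proof.
have vfo : forall i (h : i < n.+1), vf m i = m (Ordinal h) := fun i h => vf_ord m (Ordinal h).
case=> sn fs1 flt fgt [f0 fsum] hk.
have so : s < n.+1 by rewrite ltnS.
rewrite inE; apply/andP; split.
  apply/andP; split; first by rewrite -(vf_ord m ord0) f0.
  by rewrite -[X in _ == X]fsum; apply/eqP; apply: eq_bigr => i _; rewrite vf_ord.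
apply/existsP; exists (Ordinal so).
have hsm : is_smallest_part m (Ordinal so).
  apply/andP; split; first by rewrite -vfo fs1.
  apply/forallP => i; apply/implyP => /= lti; by rewrite -vf_ord flt.
rewrite hsm /=; apply/andP; split.
  rewrite /spt1do_at hsm /= -vfo fs1 /=.
  apply/forallP => i; apply/implyP => /= gti; rewrite -vf_ord.
  case: (fgt _ gti) => -> h /=; apply/implyP; exact: h.
by rewrite -hk /kpar /nparts_gt; apply/eqP; apply: congr1; apply: eq_bigr => i _; rewrite vf_ord.
Qed.

Definition DPq (q : nat -> bool) n (e : nat -> nat) :=
  [/\ e 0 = 0, \sum_(i < n.+1) i * e i = n & forall i, e i <= 1 /\ (0 < e i -> q i)].

Definition Dset (q : nat -> bool) n := [set m : ptn n | is_ptn m &&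
      [forall i : 'I_n.+1, ((m i : nat) <= 1) && ((0 < m i) ==> q i)]].

Lemma p_deE n : p_de n = #|Dset (fun i => ~~ odd i) n|. Proof. by []. Qed.
Lemma p_doE n : p_do n = #|Dset odd n|. Proof. by []. Qed.

Lemma Dset_DP q n (m : ptn n) : (m \in Dset q n) <-> DPq q n (vf m).
Proof.
split.
  rewrite inE => /andP [/andP[h0 /eqP hs] /forallP h].
  split.
  - by rewrite (vf_ord m ord0); apply/eqP.
  - by rewrite -[X in _ = X]hs; apply: eq_bigr => i _; rewrite vf_ord.
  move=> i; case: (ltnP n i) => hi; first by rewrite vf_out.
  rewrite -ltnS in hi; rewrite (vf_ord m (Ordinal hi)).
  by move: (h (Ordinal hi)) => /andP [-> /implyP].
case=> e0 es he; rewrite inE; apply/andP; split.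
  apply/andP; split; first by rewrite -(vf_ord m ord0) e0.
  by rewrite -[X in _ == X]es; apply/eqP; apply: eq_bigr => i _; rewrite vf_ord.
apply/forallP => i; rewrite -vf_ord; case: (he i) => -> h /=; apply/implyP; exact: h.
Qed.

Definition Gf (f : nat -> nat) j :=
  if isminb f j then 0 else if isminb f j.+1 && (0 < j) then 1 else f j.
Definition Sh (e : nat -> nat) j :=
  if isminb e j then 0 else if (0 < j) && isminb e j.-1 then 1 else e j.
Definition Ad1 (e : nat -> nat) j := if j == 1 then 1 else e j.

Lemma Gf_expl f s : 0 < f s -> (forall i, i < s -> f i = 0) ->
  Gf f = fun j => if j == s then 0 else if (j.+1 == s) && (0 < j) then 1 else f j.
Proof. by move=> h z; apply: functional_extensionality => j; rewrite /Gf !(isminP h z). Qed.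

Lemma Sh_expl e u : 0 < e u -> (forall i, i < u -> e i = 0) ->
  Sh e = fun j => if j == u then 0 else if j == u.+1 then 1 else e j.
Proof.
move=> h z; apply: functional_extensionality => j; rewrite /Sh !(isminP h z).
by case: j => [|j] //=; rewrite eqSS.
Qed.

Lemma fwd n f s : 1 < n -> SPc n f s -> (forall i, n < i -> f i = 0) ->
  [/\ (forall i, n.-1 < i -> Gf f i = 0), DPq (fun i => odd i != odd s) n.-1 (Gf f) &
      \sum_(i < n.+1) Gf f i + 1 = \sum_(i < n.+1) f i + (1 < s)].
Proof.
move=> n1 [sn fs1 flt fgt [f0 fsum]] fout.
have s0 : 0 < s by case: s fs1 {flt fgt sn} => //; rewrite f0.
rewrite (Gf_expl (f := f) (s := s)) ?fs1 //.
set F := (fun j => if j == s then 0 else _).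
have Fle : forall i, F i <= 1.
  move=> i; rewrite /F; case: eqP => // _; case: ifP => // _.
  case: (ltngtP i s) => h; [by rewrite flt | by case: (fgt i h) | by subst; rewrite fs1].
have wsum : \sum_(i < n.+1) i * F i + s = \sum_(i < n.+1) i * f i + s.-1.
  apply: (sum_adj (u := fun i => i * F i) (v := fun i => i * f i) (a := s) (c := s.-1) (x := s) (y := s.-1)); [by rewrite ltnS | by apply: (leq_ltn_trans (leq_pred s)); rewrite ltnS |].
  move=> i _; rewrite /F; case: (eqVneq i s) => [->|ns].
    by rewrite fs1 muln0 muln1 gtn_eqF ?ltn_predL // addn0 add0n.
  case: (eqVneq i.+1 s) => [e|ne] /=.
    have -> : i == s.-1 by rewrite -e.
    rewrite flt -?e //; case: i {e ns} => [|i] //=; lia.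
  have -> : (i == s.-1) = false by apply/negbTE; apply: contra ne => /eqP ->; rewrite prednK.
  done.
have FS : \sum_(i < n.+1) i * F i = n.-1 by move: wsum; rewrite fsum; lia.
have Fn : F n = 0.
  have := term_le F (ltnSn n); rewrite FS.
  have := Fle n; case: (F n) => [|[|k]] //; lia.
have Fout : forall i, n.-1 < i -> F i = 0.
  move=> i; rewrite prednK ?(ltnW n1) // => hi.
  rewrite leq_eqVlt in hi; case/orP: hi => [/eqP <- //|hi].
  rewrite /F; rewrite (_ : (i == s) = false); last by apply/negbTE; rewrite neq_ltn (leq_ltn_trans sn hi) orbT.
  rewrite (_ : (i.+1 == s) = false); last by apply/negbTE; rewrite neq_ltn (leq_ltn_trans sn (ltn_trans hi (ltnSn i))) orbT.
  by rewrite fout.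
split => //.
  split.
  - by rewrite /F (_ : (0 == s) = false) ?andbF ?f0 //; case: (s) s0.
  - by rewrite prednK ?(ltnW n1) //; move: FS; rewrite big_ord_recr /= Fn muln0 addn0.
  move=> i; split=> //; rewrite /F.
  case: eqP => // ns; case: ifP => [/andP [/eqP <- _] _| _] /=; first by case: (odd i).
  case: (ltngtP i s) => h; [by rewrite flt | by case: (fgt i h) | by case: ns].
apply: (sum_adj (u := F) (v := f) (a := s) (c := s.-1) (x := 1) (y := (1 < s))); [by rewrite ltnS | by apply: (leq_ltn_trans (leq_pred s)); rewrite ltnS |].
move=> i _; rewrite /F; case: (eqVneq i s) => [->|ns].
  by rewrite fs1 gtn_eqF ?ltn_predL.
case: (eqVneq i.+1 s) => [e|ne] /=.
  have -> : i == s.-1 by rewrite -e.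
  rewrite flt -?e //; case: i {e ns} => [|i] //=.
have -> : (i == s.-1) = false by apply/negbTE; apply: contra ne => /eqP ->; rewrite prednK.
done.
Qed.

Lemma bwd q n' e u : 0 < n' -> DPq q n' e -> (forall i, n' < i -> e i = 0) ->
  0 < e u -> (forall i, i < u -> e i = 0) -> (forall i, 0 < e i -> odd i = odd u) ->
  [/\ (forall i, n'.+1 < i -> Sh e i = 0), (forall i, Sh e i <= 1), SPc n'.+1 (Sh e) u.+1 &
      \sum_(i < n'.+2 | u.+1 < i) Sh e i + 1 = \sum_(i < n'.+1) e i].
Proof.
move=> n0 [e0 esum ele] eout eu z par.
have eu1 : e u = 1 by case: (ele u); case: (e u) eu => [|[|k]].
have eu2 : e u.+1 = 0.
  case: (posnP (e u.+1)) => // /par; rewrite /=; by case: (odd u).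
have un : u <= n' by rewrite leqNgt; apply/negP => /eout; rewrite eu1.
have u0 : 0 < u by case: u eu eu1 {z par un eu2} => //; rewrite e0.
rewrite (Sh_expl eu z).
set f := (fun j => if j == u then 0 else _).
have en : e n'.+1 = 0 by apply: eout.
have esum2 : \sum_(i < n'.+2) i * e i = n' by rewrite big_ord_recr /= en muln0 addn0.
split.
- move=> i hi; rewrite /f (_ : (i == u) = false); last by apply/negbTE; rewrite neq_ltn (leq_ltn_trans un (ltn_trans (ltnSn n') hi)) orbT.
  rewrite (_ : (i == u.+1) = false); last by apply/negbTE; rewrite neq_ltn (leq_ltn_trans (un : u.+1 <= n'.+1) hi) orbT.
  by apply: eout; apply: ltn_trans hi.
- by move=> i; rewrite /f; case: eqP => //; case: eqP => // _ _; case: (ele i).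
- split.
  + by [].
  + by rewrite /f (_ : (u.+1 == u) = false) ?eqxx // gtn_eqF.
  + move=> i; rewrite ltnS leq_eqVlt => /orP [/eqP -> | hi]; first by rewrite /f eqxx.
    rewrite /f (ltn_eqF hi) (_ : (i == u.+1) = false) ?z //.
    by apply/negbTE; rewrite neq_ltn (ltn_trans hi (ltnSn u)).
  + move=> i hi; rewrite /f (_ : (i == u) = false); last by apply/negbTE; rewrite neq_ltn (ltn_trans (ltnSn u) hi) orbT.
    rewrite (gtn_eqF hi); case: (ele i) => -> _; split=> // /par ->.
    by rewrite /= ; case: (odd u).
  + split; first by rewrite /f (_ : (0 == u) = false) ?e0 //; rewrite eq_sym; apply/negbTE; rewrite -lt0n.
    have := sum_adj (N := n'.+2) (u := fun i => i * f i) (v := fun i => i * e i) (a := u) (c := u.+1) (x := u) (y := u.+1).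
    rewrite esum2; move=> H; have {}H := H (leq_trans un (leqnSn _)) un; apply/eqP; rewrite -(eqn_add2r u).
    rewrite H ?addnS ?addSn // => i _; rewrite /f.
    case: (eqVneq i u) => [->|nu]; first by rewrite eu1 muln0 muln1 ltn_eqF // addn0.
    case: (eqVneq i u.+1) => [->|nu1]; first by rewrite eu2 muln0 muln1 addn0.
    by rewrite addn0.
rewrite big_mkcond /=.
have -> : \sum_(i < n'.+1) e i = \sum_(i < n'.+2) e i by rewrite [RHS]big_ord_recr /= en addn0.
have := sum_adj (N := n'.+2) (u := fun i => if u.+1 < i then f i else 0) (v := e) (a := u) (c := 0) (x := 1) (y := 0).
rewrite addn0 => H; apply: H; [by rewrite ltnS (leq_trans un) | by [] |].
move=> i _; rewrite /f if_same addn0; case: (ltngtP i u) => h.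
- rewrite z // ltnNge (ltnW (ltn_trans h (ltnSn u))).
  by [].
- rewrite leq_eqVlt in h; case/orP: h => [/eqP <- | h]; first by rewrite ltnn eu2.
  by rewrite h (gtn_eqF h) addn0.
- by subst; rewrite ltnNge leqnSn eu1.
Qed.

Lemma GfSh e u : 0 < u -> e u = 1 -> e u.+1 = 0 -> (forall i, i < u -> e i = 0) -> Gf (Sh e) = e.
Proof.
move=> u0 eu eu2 z; rewrite (Sh_expl (e := e) (u := u)) ?eu //.
rewrite (Gf_expl (s := u.+1)); last first.
- move=> i; rewrite ltnS leq_eqVlt => /orP [/eqP -> | h]; first by rewrite eqxx.
  by rewrite (ltn_eqF h) (ltn_eqF (ltn_trans h (ltnSn u))) z.
- by rewrite (gtn_eqF (ltnSn u)) eqxx.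
apply: functional_extensionality => j.
case: (eqVneq j u.+1) => [-> | n1] //=.
rewrite eqSS; case: (eqVneq j u) => [-> | n2] /=; first by rewrite u0 eu.
by [].
Qed.

Lemma ShGf f s : 1 < s -> f s = 1 -> (forall i, i < s -> f i = 0) -> Sh (Gf f) = f.
Proof.
move=> s1 fs z; rewrite (Gf_expl (f := f) (s := s)) ?fs //.
have sS : s.-1.+1 = s by rewrite prednK // ltnW.
rewrite (Sh_expl (u := s.-1)); last first.
- move=> i h; rewrite (ltn_eqF (ltn_trans h _)); last by rewrite -{2}sS.
  rewrite (_ : (i.+1 == s) = false); last by rewrite -sS eqSS ltn_eqF.
  by rewrite z // (ltn_trans h) // -{2}sS.
- rewrite sS eqxx ltn_eqF ?ltn_predL ?(ltnW s1) //=; by case: (s) s1 => [|[|k]].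
apply: functional_extensionality => j.
case: (eqVneq j s.-1) => [-> | n1]; first by rewrite z // -{2}sS.
rewrite sS; case: (eqVneq j s) => [-> | n2] //.
by rewrite (_ : (j.+1 == s) = false) //; rewrite -sS eqSS (negbTE n1).
Qed.

Lemma GfAd e : e 0 = 0 -> e 1 = 0 -> Gf (Ad1 e) = e.
Proof.
move=> e0 e1; rewrite (Gf_expl (s := 1)) /Ad1 //; last by case=> // _; rewrite e0.
by apply: functional_extensionality => j; case: (eqVneq j 1) => [-> | n] //=; case: j n.
Qed.

Lemma AdGf f : f 0 = 0 -> f 1 = 1 -> Ad1 (Gf f) = f.
Proof.
move=> f0 f1; rewrite (Gf_expl (s := 1)) /Ad1 ?f1 //; last by case=> // _; rewrite f0.
by apply: functional_extensionality => j; case: (eqVneq j 1) => [-> | n] //=; case: j n.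
Qed.

Definition X n := [set m : ptn n | [exists s : 'I_n.+1, isminb (vf m) s && odd s]].

Lemma X_SP n (m : ptn n) s : SPc n (vf m) s -> (m \in X n) = odd s.
Proof.
case=> sn fs1 flt _ _; have mP := isminP (f := vf m) (s := s); rewrite fs1 in mP.
have {}mP := mP isT flt.
rewrite inE; apply/existsP/idP => [[j] | os].
  by rewrite mP => /andP [/eqP -> ].
have so : s < n.+1 by rewrite ltnS.
by exists (Ordinal so); rewrite mP /= eqxx.
Qed.

Lemma DPq_imp (q1 q2 : nat -> bool) n e : (forall i, q1 i -> q2 i) -> DPq q1 n e -> DPq q2 n e.
Proof. move=> h [e0 es he]; split=> // i; case: (he i) => a b; split=> // /b; exact: h. Qed.

Lemma exmin q n e : 0 < n -> DPq q n e -> exists u, 0 < e u /\ forall i, i < u -> e i = 0.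
Proof.
move=> n0 [e0 es he].
have ex : exists i, 0 < e i.
  case: (boolP [exists i : 'I_n.+1, 0 < e i]) => [/existsP [i hi] | ]; first by exists i.
  move/existsPn => h; move: es; rewrite big1 => [ ee | i _]; first by rewrite -ee in n0.
  by have := h i; rewrite lt0n negbK => /eqP ->; rewrite muln0.
case: (ex_minnP ex) => u hu hm; exists u; split=> // i hi.
by apply/eqP; rewrite -leqn0 leqNgt; apply/negP => /hm; rewrite leqNgt hi.
Qed.

Lemma minfacts q n e u : DPq q n e -> 0 < e u -> (forall i, 0 < e i -> odd i = odd u) ->
  [/\ e u = 1, e u.+1 = 0 & 0 < u].
Proof.
move=> [e0 es he] eu par; split.
- by case: (he u); case: (e u) eu => [|[|k]].
- by case: (posnP (e u.+1)) => // /par; rewrite /=; case: (odd u).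
- by case: u eu {par}; rewrite ?e0.
Qed.

Lemma par_even n f s : SPc n f s -> ~~ odd s -> kpar n f s = odd n.
Proof.
case=> sn fs1 flt fgt [f0 fsum] os.
rewrite -[X in _ = odd X]fsum odd_wsum /kpar; congr odd.
rewrite big_mkcond [RHS]big_mkcond; apply: eq_bigr => i _ /=.
case: (ltngtP i s) => h.
- by rewrite flt //; case: ifP.
- case: (fgt i h) => _ H; case: (posnP (f i)) => [-> | /H]; first by case: ifP.
  by rewrite (negbTE os); case: (odd i).
- by subst; rewrite (negbTE os).
Qed.

Lemma par_odd n f s : SPc n f s -> odd s -> odd n.
Proof.
case=> sn fs1 flt fgt [f0 fsum] os.
rewrite -fsum odd_wsum big_mkcond /=.
have so : s < n.+1 by rewrite ltnS.
rewrite (eq_bigr (fun i : 'I_n.+1 => if nat_of_ord i == s then 1 else 0)) ?sum_ind // => i _.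
case: (ltngtP i s) => h.
- by rewrite flt //; case: ifP.
- case: (fgt i h) => _ H; case: (posnP (f i)) => [-> | /H]; first by case: ifP.
  by rewrite os; case: (odd i).
- by subst; rewrite os fs1.
Qed.

Lemma cnt n f s : SPc n f s -> \sum_(i < n.+1) f i = 1 + \sum_(i < n.+1 | s < i) f i.
Proof.
case=> sn fs1 flt fgt _.
rewrite [in RHS]big_mkcond /= addnC.
rewrite -[LHS]addn0; apply: (sum_adj (N := n.+1) (u := f) (v := fun i => if s < i then f i else 0) (a := 0) (c := s) (x := 0) (y := 1)); [done | by rewrite ltnS |].
move=> i _; rewrite if_same addn0; case: (ltngtP i s) => h.
- by rewrite flt.
- by rewrite addn0.
- by subst; rewrite fs1.
Qed.

Lemma DP_le q n e : 0 < n -> DPq q n e -> forall i, e i <= n.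
Proof. by move=> n0 [_ _ he] i; case: (he i) => h _; apply: leq_trans h n0. Qed.

Lemma s_pos n f s : SPc n f s -> 0 < s.
Proof. by case=> _ fs1 _ _ [f0 _]; case: s fs1 => //; rewrite f0. Qed.

Lemma L1 n' b : 0 < n' -> odd n'.+1 = b -> #|Bset b n'.+1 :\: X n'.+1| = #|Dset odd n'|.
Proof.
move=> n0 hb; have n1 : 1 < n'.+1 by [].
apply: (card_bij (g := fun m => mk n' (Gf (vf m))) (h := fun m => mk n'.+1 (Sh (vf m)))).
- move=> m; rewrite in_setD => /andP [nX /Bset_SP [s [sp hk]]].
  rewrite (X_SP sp) in nX.
  have [Fout DP _] := fwd n1 sp (fun i h => vf_out m h); rewrite /= in Fout DP.
  apply/Dset_DP; rewrite vf_mk //; last exact: DP_le n0 DP.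
  by apply: DPq_imp DP => i; rewrite (negbTE nX); case: (odd i).
- move=> m /Dset_DP DP.
  have [u [eu z]] := exmin n0 DP.
  have ou : odd u by case: DP => _ _ /(_ u) [_ /(_ eu)].
  have par : forall i, 0 < vf m i -> odd i = odd u.
    by move=> i hi; rewrite ou; case: DP => _ _ /(_ i) [_ /(_ hi)].
  have [out le1 sp cntE] := bwd n0 DP (fun i h => vf_out m h) eu z par.
  have vmk : vf (mk n'.+1 (Sh (vf m))) = Sh (vf m) by apply: vf_mk => // i; apply: leq_trans (le1 i) _.
  have sp' : SPc n'.+1 (vf (mk n'.+1 (Sh (vf m)))) u.+1 by rewrite vmk.
  rewrite in_setD (X_SP sp') /= ou /=; apply: (SP_Bset sp').
  by rewrite vmk par_even //= ou.
- move=> m; rewrite in_setD => /andP [nX /Bset_SP [s [sp hk]]] /=.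
  rewrite (X_SP sp) in nX.
  have [Fout DP _] := fwd n1 sp (fun i h => vf_out m h); rewrite /= in Fout DP.
  rewrite vf_mk //; last exact: DP_le n0 DP.
  have s0 := s_pos sp; case: sp => _ fs1 flt _ _.
  rewrite (ShGf (s := s)) ?mkK //; case: (s) s0 nX => [|[|k]] //.
- move=> m /Dset_DP DP /=.
  have [u [eu z]] := exmin n0 DP.
  have ou : odd u by case: DP => _ _ /(_ u) [_ /(_ eu)].
  have par : forall i, 0 < vf m i -> odd i = odd u.
    by move=> i hi; rewrite ou; case: DP => _ _ /(_ i) [_ /(_ hi)].
  have [out le1 sp cntE] := bwd n0 DP (fun i h => vf_out m h) eu z par.
  have [eu1 eu2 u0] := minfacts DP eu par.
  rewrite vf_mk //; last by move=> i; apply: leq_trans (le1 i) _.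
  by rewrite (GfSh (u := u)) ?mkK.
Qed.

Lemma ad1P n' e : DPq (fun i => ~~ odd i) n' e -> (forall i, n' < i -> e i = 0) ->
  [/\ (forall i, n'.+1 < i -> Ad1 e i = 0), (forall i, Ad1 e i <= 1), SPc n'.+1 (Ad1 e) 1 &
      \sum_(i < n'.+2 | 1 < i) Ad1 e i = \sum_(i < n'.+1) e i].
Proof.
move=> [e0 es he] eout.
have e1 : e 1 = 0 by case: (he 1) => _; case: (posnP (e 1)) => // _ /(_ isT).
have en : e n'.+1 = 0 by apply: eout.
have es2 : \sum_(i < n'.+2) i * e i = n' by rewrite big_ord_recr /= en muln0 addn0.
split.
- move=> i hi; rewrite /Ad1 (gtn_eqF (leq_ltn_trans _ hi)) ?eout //; exact: ltn_trans (ltnSn n') hi.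
- by move=> i; rewrite /Ad1; case: eqP => // _; case: (he i).
- split => //.
  + by case=> // _; rewrite /Ad1 e0.
  + move=> i hi; rewrite /Ad1 (gtn_eqF hi); case: (he i) => -> h; split=> // /h.
    by case: (odd i).
  + split; first by rewrite /Ad1 e0.
    rewrite -[LHS]addn0; transitivity (\sum_(i < n'.+2) i * e i + 1); last by rewrite es2 addn1.
    apply: (sum_adj (N := n'.+2) (u := fun i => i * Ad1 e i) (v := fun i => i * e i) (a := 0) (c := 1) (x := 0) (y := 1)) => // i _.
    rewrite if_same /Ad1; case: (eqVneq i 1) => [-> | n1] /=; first by rewrite e1.
    by rewrite addn0.
rewrite big_mkcond /= [RHS](_ : _ = \sum_(i < n'.+2) e i); last by rewrite [RHS]big_ord_recr /= en addn0.
apply: eq_bigr => i _; rewrite /Ad1.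
case: (ltngtP 1 i) => h.
- by [].
- by case: (nat_of_ord i) h => [|[|k]] //; rewrite e0.
- by rewrite -h e1.
Qed.

Definition Hm n' b (e : nat -> nat) := if odd (\sum_(i < n'.+1) e i) == b then Ad1 e else Sh e.

Lemma L2 n' b : 0 < n' -> odd n'.+1 ->
  #|Bset b n'.+1 :&: X n'.+1| = #|Dset (fun i => ~~ odd i) n'|.
Proof.
move=> n0 hn; have n1 : 1 < n'.+1 by [].
apply: (card_bij (g := fun m => mk n' (Gf (vf m))) (h := fun m => mk n'.+1 (Hm n' b (vf m)))).
- move=> m; rewrite in_setI => /andP [/Bset_SP [s [sp hk]] iX].
  rewrite (X_SP sp) in iX.
  have [Fout DP _] := fwd n1 sp (fun i h => vf_out m h); rewrite /= in Fout DP.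
  apply/Dset_DP; rewrite vf_mk //; last exact: DP_le n0 DP.
  by apply: DPq_imp DP => i; rewrite iX; case: (odd i).
- move=> m /Dset_DP DP; rewrite /Hm; case: eqP => hc.
    have [out le1 sp cntE] := ad1P DP (fun i h => vf_out m h).
    have vmk : vf (mk n'.+1 (Ad1 (vf m))) = Ad1 (vf m) by apply: vf_mk => // i; apply: leq_trans (le1 i) _.
    have sp' : SPc n'.+1 (vf (mk n'.+1 (Ad1 (vf m)))) 1 by rewrite vmk.
    rewrite in_setI (X_SP sp') andbT; apply: (SP_Bset sp').
    by rewrite vmk /kpar cntE.
  have [u [eu z]] := exmin n0 DP.
  have ou : ~~ odd u by case: DP => _ _ /(_ u) [_ /(_ eu)].
  have par : forall i, 0 < vf m i -> odd i = odd u.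
    by move=> i hi; rewrite (negbTE ou); case: DP => _ _ /(_ i) [_ /(_ hi)] /negbTE.
  have [out le1 sp cntE] := bwd n0 DP (fun i h => vf_out m h) eu z par.
  have vmk : vf (mk n'.+1 (Sh (vf m))) = Sh (vf m) by apply: vf_mk => // i; apply: leq_trans (le1 i) _.
  have sp' : SPc n'.+1 (vf (mk n'.+1 (Sh (vf m)))) u.+1 by rewrite vmk.
  rewrite in_setI (X_SP sp') /= (negbTE ou) andbT; apply: (SP_Bset sp').
  rewrite vmk /kpar; move: hc; rewrite -cntE addn1 /=.
  by case: b; case: (odd _).
- move=> m; rewrite in_setI => /andP [/Bset_SP [s [sp hk]] iX] /=.
  rewrite (X_SP sp) in iX.
  have [Fout DP cF] := fwd n1 sp (fun i h => vf_out m h); rewrite /= in Fout DP.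
  rewrite vf_mk //; last exact: DP_le n0 DP.
  have s0 := s_pos sp.
  have cf := cnt sp.
  rewrite [in LHS]big_ord_recr /= Fout // addn0 cf in cF.
  have cF' : \sum_(i < n'.+1) Gf (vf m) i = \sum_(i < n'.+2 | s < i) vf m i + (1 < s).
    by move/eqP: cF; rewrite [X in X == _]addnC -addnA eqn_add2l => /eqP.
  rewrite /Hm cF' oddD; rewrite /kpar in hk; rewrite hk.
  case: sp => _ fs1 flt _ [f0 _].
  case: (ltnP 1 s) => hs /=.
    by rewrite addbT (_ : (~~ b == b) = false) ?(ShGf (s := s)) ?mkK //; case: (b).
  have s1 : s = 1 by apply/eqP; rewrite eqn_leq hs.
  by subst s; rewrite addbF eqxx AdGf ?mkK.
- move=> m /Dset_DP DP /=; rewrite /Hm; case: eqP => hc.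
    have [out le1 sp cntE] := ad1P DP (fun i h => vf_out m h).
    rewrite vf_mk //; last by move=> i; apply: leq_trans (le1 i) _.
    case: DP => e0 _ he.
    have e1 : vf m 1 = 0 by case: (he 1) => _; case: (posnP (vf m 1)) => // _ /(_ isT).
    by rewrite GfAd ?mkK.
  have [u [eu z]] := exmin n0 DP.
  have ou : ~~ odd u by case: DP => _ _ /(_ u) [_ /(_ eu)].
  have par : forall i, 0 < vf m i -> odd i = odd u.
    by move=> i hi; rewrite (negbTE ou); case: DP => _ _ /(_ i) [_ /(_ hi)] /negbTE.
  have [out le1 sp cntE] := bwd n0 DP (fun i h => vf_out m h) eu z par.
  have [eu1 eu2 u0] := minfacts DP eu par.
  rewrite vf_mk //; last by move=> i; apply: leq_trans (le1 i) _.
  by rewrite (GfSh (u := u)) ?mkK.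
Qed.

Lemma E1 n b : odd n != b -> #|Bset b n :\: X n| = 0.
Proof.
move=> hb; apply/eqP; rewrite cards_eq0; apply/eqP/setP => m; rewrite in_set0.
apply/negP; rewrite in_setD => /andP [nX /Bset_SP [s [sp hk]]].
rewrite (X_SP sp) in nX.
by move: hb; rewrite -hk par_even // eqxx.
Qed.

Lemma E2 n b : ~~ odd n -> #|Bset b n :&: X n| = 0.
Proof.
move=> hn; apply/eqP; rewrite cards_eq0; apply/eqP/setP => m; rewrite in_set0.
apply/negP; rewrite in_setI => /andP [/Bset_SP [s [sp hk]] iX].
rewrite (X_SP sp) in iX.
by move: hn; rewrite (par_odd sp iX).
Qed.

Lemma E3 n : odd n -> #|Dset (fun i => ~~ odd i) n| = 0.
Proof.
move=> hn; apply/eqP; rewrite cards_eq0; apply/eqP/setP => m; rewrite in_set0.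
apply/negP => /Dset_DP [e0 es he].
move: hn; rewrite -es odd_wsum big1 // => i oi.
case: (he i) => _; case: (posnP (vf m i)) => // _ /(_ isT); by rewrite oi.
Qed.

Lemma L1' n b : 0 < n.-1 -> odd n = b -> #|Bset b n :\: X n| = #|Dset odd n.-1|.
Proof. by case: n => [|n] //= h1 h2; apply: L1. Qed.

Lemma Bsplit b n : B b n = #|Bset b n :&: X n| + #|Bset b n :\: X n|.
Proof. by rewrite cardsID. Qed.

Theorem lemma5 (t : nat) (ht : 0 < t) :
  [/\ B0 (2 * t).+1 = p_de (2 * t),
      B0 (2 * t) = p_de (2 * t).-1 + p_do (2 * t).-1,
      B1 (2 * t) = p_de (2 * t).-1
    & B1 (2 * t).+1 = p_de (2 * t) + p_do (2 * t)].
Proof.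
have t2 : 0 < 2 * t by rewrite muln_gt0.
have ev : odd (2 * t) = false by rewrite oddM.
have e2 : 2 * t = (2 * t).-1.+1 by rewrite prednK.
have t1 : 0 < (2 * t).-1 by rewrite -ltnS -e2; case: t ht {t2 ev e2} => [|[|k]].
have od : odd (2 * t).-1 by move: ev; rewrite e2 /=; case: (odd _).
rewrite /B0 /B1 !p_deE !p_doE !Bsplit.
split.
- by rewrite L2 ?E1 ?addn0 //= ev.
- by rewrite E3 // E2 ?ev // L1' ?ev.
- by rewrite E3 // E2 ?ev // E1 ?ev.
- by rewrite L2 ?L1 //= ev.
Qed.
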